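(* Let $\mathcal{D}$ be an $S(2,k,v)$ that has a near parallel class. Then $G_1=1$-$\mathrm{BIG}(\mathcal{D})$ is not silver.
   Context: A Steiner $2$-design $S(2,k,v)$ ($2<k<v$) is a pair $(V,\mathcal{B})$ with $|V|=v$ and $\mathcal{B}$ a collection of $k$-subsets of $V$ (blocks) such that every $2$-subset of $V$ lies in exactly one block. A partial parallel class is a set of pairwise disjoint blocks; a near parallel class is a partial parallel class whose union is $V$ minus a single element. The $1$-block intersection graph $1$-$\mathrm{BIG}(\mathcal{D})$ has the blocks as vertices, two blocks adjacent iff they intersect in exactly one element (it is $k(v-k)/(k-1)$-regular). An $\alpha$-set of a graph is a maximum independent set. Let $G$ be an $r$-regular graph and $c$ a proper $(r+1)$-coloring of $G$. A vertex $x$ is rainbow with respect to $c$ if every one of the $r+1$ colors appears on $N[x]=N(x)\cup\{x\}$. Given an $\alpha$-set $I$, $c$ is silver with respect to $I$ if every $x\in I$ is rainbow; $G$ is silver if it admits a silver coloring with respect to some $\alpha$-set. *)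

(* Defs.v *)
From mathcomp Require Import all_boot.
Set Implicit Arguments. Unset Strict Implicit. Unset Printing Implicit Defensive.

Definition steiner_2design (T : finType) (B : {set {set T}}) (k : nat) : Prop :=
  [/\ 2 < k, k < #|T|,
      (forall b, b \in B -> #|b| = k) &
      (forall x y : T, x != y ->
         #|[set b in B | (x \in b) && (y \in b)]| = 1)].

Definition partial_parallel_class (T : finType) (B P : {set {set T}}) : Prop :=
  P \subset B /\
  (forall b1 b2, b1 \in P -> b2 \in P -> b1 != b2 -> [disjoint b1 & b2]).

Definition near_parallel_class (T : finType) (B P : {set {set T}}) : Prop :=
  partial_parallel_class B P /\ exists z : T, cover P = [set~ z].

Definition block (T : finType) (B : {set {set T}}) := {b : {set T} | b \in B}.

Definition BIG1 (T : finType) (B : {set {set T}}) : rel (block B) :=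
  fun b1 b2 => #|val b1 :&: val b2| == 1.

Arguments BIG1 {T} B.

Definition regular_graph (V : finType) (e : rel V) (r : nat) : Prop :=
  forall x : V, #|[set y | e x y]| = r.

Definition independent (V : finType) (e : rel V) (I : {set V}) : Prop :=
  forall x y, x \in I -> y \in I -> ~~ e x y.

Definition alpha_set (V : finType) (e : rel V) (I : {set V}) : Prop :=
  independent e I /\ (forall J : {set V}, independent e J -> #|J| <= #|I|).

Definition proper_coloring (V : finType) (e : rel V) (n : nat) (c : V -> 'I_n) : Prop :=
  forall x y, e x y -> c x != c y.

Definition rainbow (V : finType) (e : rel V) (n : nat) (c : V -> 'I_n) (x : V) : Prop :=
  forall i : 'I_n, exists y : V, ((y == x) || e x y) && (c y == i).

Definition silver_wrt (V : finType) (e : rel V) (r : nat) (I : {set V})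
  (c : V -> 'I_r.+1) : Prop :=
  proper_coloring e c /\ (forall x, x \in I -> rainbow e c x).

Definition silver (V : finType) (e : rel V) : Prop :=
  exists r : nat, regular_graph e r /\
    exists I : {set V}, alpha_set e I /\
      exists c : V -> 'I_r.+1, silver_wrt e I c.

(* Main.v *)
Require Import Defs.
From mathcomp Require Import all_boot.
From Stdlib Require Import Lia.
Set Implicit Arguments. Unset Strict Implicit. Unset Printing Implicit Defensive.
Lemma ar1 a m k v : 2 < k -> a <= m -> m * k <= v -> v.-1 = a * k -> k < v -> m * k = v.-1.
Proof.
case: v => [//|w] /= h1 h2 h3 h4 h5.
case: (leqP m a) => hma.
  have -> : m = a by apply/eqP; rewrite eqn_leq hma h2.
  by [].
have h6 : a.+1 * k <= m * k by apply: leq_mul.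
rewrite mulSn -h4 in h6.
move/leP: h1 => h1; move/leP: h3 => h3; move/leP: h6 => h6. rewrite -?plusE -?multE in h1 h3 h6 *. lia.
Qed.
Lemma ar3 s m k : s * k.-1 = m * k -> 0 < m -> 2 < k -> s <= m -> False.
Proof.
move=> h /leP h1 /leP h2 /leP h3.
have h4 : s * k.-1 <= m * k.-1 by apply: leq_mul => //; apply/leP.
move/leP: h4 => h4. rewrite -?plusE -?multE -?minusE in h h1 h2 h3 h4 *. nia.
Qed.
Lemma ar2 m s r k : 2 < k -> s * k.-1 = m * k -> 0 < m -> 2 * (r.+1 - s) <= m -> s + s <= r.+1 + 1 -> False.
Proof.
move=> h1 h2 h3 h4 h5.
have hsm : m < s.
  rewrite ltnNge; apply/negP => hh; exact: (@ar3 _ _ _ h2 h3 h1 hh).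
move/leP: h3 => h3; move/leP: h4 => h4; move/leP: h5 => h5; move/leP: hsm => hsm.
rewrite -?plusE -?multE -?minusE in h3 h4 h5 hsm. lia.
Qed.

Lemma card_sum (T : finType) (A Y : {set T}) :
  #|A :&: Y| = \sum_(p in Y) (p \in A : nat).
Proof.
rewrite -sum1_card big_mkcond [RHS]big_mkcond /=.
by apply: eq_bigr => p _; rewrite in_setI; case: (p \in A); case: (p \in Y).
Qed.

Lemma cover_sum (T V : finType) (I : {set V}) (f : V -> {set T}) (Y : {set T}) :
  (forall x y, x \in I -> y \in I -> x != y -> [disjoint f x & f y]) ->
  #|Y :&: [set p | [exists x in I, p \in f x]]| = \sum_(x in I) #|f x :&: Y|.
Proof.
move=> hd.
rewrite setIC card_sum.
under [RHS]eq_bigr => x _ do rewrite card_sum.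
rewrite exchange_big /=; apply: eq_bigr => p _.
rewrite inE; case: existsP => [[x0 /andP [x0I px0]]|hn].
  rewrite (bigD1 x0) //= px0 big1 //= => x /andP [xI xx0].
  suff /negbTE -> : p \notin f x by [].
  apply/negP => px.
  have := hd x x0 xI x0I xx0; rewrite -setI_eq0 => /eqP h.
  have : p \in f x :&: f x0 by rewrite inE px px0.
  by rewrite h inE.
rewrite big1 // => x xI; suff /negbTE -> : p \notin f x by [].
apply/negP => px; apply: hn; exists x.
by rewrite xI px.
Qed.

Lemma st_uniq (T : finType) (B : {set {set T}}) (k : nat) :
  steiner_2design B k -> forall (x y : block B) (p q : T), p != q ->
  p \in val x -> q \in val x -> p \in val y -> q \in val y -> x = y.
Proof.
case=> _ _ _ hp x y p q pq px qx py qy.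
have := hp p q pq; move/eqP; rewrite eqn_leq => /andP [/card_le1_eqP h _].
apply: val_inj; apply: h; rewrite inE ?px ?qx ?py ?qy; rewrite andbT; [case: y {px qx py qy} => b hb | case: x {px qx py qy} => b hb]; rewrite /= hb //.
Qed.

Lemma st_meet (T : finType) (B : {set {set T}}) (k : nat) :
  steiner_2design B k -> forall (x y : block B), x != y ->
  #|val x :&: val y| <= 1.
Proof.
move=> hs x y xy; rewrite leqNgt; apply/negP => /card_gt1P [p [q [hp hq pq]]].
move: hp hq; rewrite !inE => /andP [px py] /andP [qx qy].
by move/eqP: xy; apply; apply: (st_uniq hs pq).
Qed.

Lemma st_size (T : finType) (B : {set {set T}}) (k : nat) :
  steiner_2design B k -> forall (x : block B), #|val x| = k.
Proof. by case=> _ _ h _ x; apply: h; apply: valP. Qed.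

Lemma st_noloop (T : finType) (B : {set {set T}}) (k : nat) :
  steiner_2design B k -> forall (x : block B), BIG1 B x x = false.
Proof.
move=> hs x; rewrite /BIG1 setIid (st_size hs).
by case: hs => h2 _ _ _; apply/negbTE; move: h2; case: k => [|[|]].
Qed.

Lemma st_rep (T : finType) (B : {set {set T}}) (k : nat) :
  steiner_2design B k -> forall p : T,
  #|[set y : block B | p \in val y]| * k.-1 = #|T|.-1.
Proof.
move=> hs p.
have hd : forall x y, x \in [set y : block B | p \in val y] ->
    y \in [set y : block B | p \in val y] -> x != y ->
    [disjoint val x :\ p & val y :\ p].
  move=> x y; rewrite !inE => px py xy; rewrite -setI_eq0; apply/eqP/setP => q.
  rewrite !inE; apply/negP => /andP [/andP [qp qx] /andP [_ qy]].
  by move/eqP: xy; apply; apply: (st_uniq hs qp).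
have hc := @cover_sum _ _ [set y : block B | p \in val y] (fun y => val y :\ p) setT hd.
have hU : [set q | [exists x in [set y : block B | p \in val y], q \in val x :\ p]] = [set~ p].
  apply/setP => q; rewrite !inE; apply/existsP/idP.
    by case=> x /andP [_]; rewrite !inE => /andP [].
  move=> qp; case: hs => _ _ _ hp; move: (hp q p qp) => /eqP /cards1P [b hb].
  have : b \in [set b in B | (q \in b) && (p \in b)] by rewrite hb inE.
  rewrite inE => /andP [bB /andP [qb pb]].
  by exists (exist _ b bB); rewrite !inE /= qb pb qp.
rewrite setTI hU cardsC1 in hc; rewrite hc.
rewrite -sum_nat_const; apply: eq_bigr => x; rewrite inE setIT => px.
by rewrite -(st_size hs x) (cardsD1 p (val x)) px.
Qed.

Theorem theorem5 (T : finType) (B : {set {set T}}) (k : nat) :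
  steiner_2design B k ->
  (exists P : {set {set T}}, near_parallel_class B P) ->
  ~ silver (BIG1 B).
Proof.
move=> hs [P [[Psub Pdisj] [z0 Pcov]]] [r [reg [I [[Iind Imax] [c [cprop crain]]]]]].
have [k2 kv _ hpair] := hs.
have Idisj : forall x y, x \in I -> y \in I -> x != y -> [disjoint val x & val y].
  move=> x y xI yI xy; have h1 := st_meet hs xy; have h2 := Iind x y xI yI.
  rewrite /BIG1 in h2; rewrite -setI_eq0 -cards_eq0.
  by move: h1 h2; case: #|_| => [|[|]].
set U := [set p | [exists x in I, p \in val x]].
have hmU : #|U| = #|I| * k.
  have := @cover_sum _ _ I val setT Idisj; rewrite setTI => ->.
  rewrite -sum_nat_const; apply: eq_bigr => x _; by rewrite setIT (st_size hs).
set IP := [set x : block B | val x \in P].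
have IPdisj : forall x y, x \in IP -> y \in IP -> x != y -> [disjoint val x & val y].
  move=> x y; rewrite !inE => xP yP xy; apply: Pdisj => //.
have hPU : #|T|.-1 = #|IP| * k.
  have := @cover_sum _ _ IP val setT IPdisj; rewrite setTI.
  have -> : [set p | [exists x in IP, p \in val x]] = [set~ z0].
    rewrite -Pcov /cover; apply/setP => p; rewrite inE; apply/existsP/bigcupP.
      case=> x /andP [xP px]; exists (val x) => //; by rewrite inE in xP.
    case=> b bP pb; have bB : b \in B := subsetP Psub b bP.
    by exists (exist _ b bB); rewrite inE /= bP pb.
  rewrite cardsC1 => ->; rewrite -sum_nat_const; apply: eq_bigr => x _.
  by rewrite setIT (st_size hs).
have IPind : independent (BIG1 B) IP.
  move=> x y xP yP; case: (eqVneq x y) => [->|xy]; first by rewrite (st_noloop hs).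
  by have := IPdisj x y xP yP xy; rewrite -setI_eq0 -cards_eq0 /BIG1 => /eqP ->.
have hIP := Imax IP IPind.
have hmk : #|I| * k = #|T|.-1.
  apply: (@ar1 _ _ _ _ k2 hIP _ hPU kv); rewrite -hmU; exact: max_card.
have [z hUz] : exists z, forall p, (p \in U) = (p != z).
  have h1 : #|~: U| == 1.
    have := cardsC U; rewrite hmU hmk.
    by move: kv; case: #|T| => [//|v] _ /= /eqP; rewrite -(addn1 v) eqn_add2l.
  have [z hz] := cards1P h1; exists z => p.
  by rewrite -[p \in U]negbK -in_setC hz inE.
set s := #|[set y : block B | z \in val y]|.
have hrep : forall p, #|[set y : block B | p \in val y]| = s.
  move=> p; apply/eqP; rewrite -(@eqn_pmul2r k.-1); last by rewrite -ltnS prednK ltnW // ltnW.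
  by rewrite (st_rep hs p) (st_rep hs z).
have hsm : s * k.-1 = #|I| * k by rewrite hmk (st_rep hs z).
have m0 : 0 < #|I|.
  rewrite lt0n; apply/negP => /eqP h0; move: hmk; rewrite h0 mul0n => h.
  move: (kv); rewrite -(prednK (leq_ltn_trans (leq0n k) kv)) -h ltnS leqn0 => /eqP k0.
  by rewrite k0 in k2.
have hN : forall x, #|[set y | (y == x) || BIG1 B x y]| = r.+1.
  move=> x; have -> : [set y | (y == x) || BIG1 B x y] = x |: [set y | BIG1 B x y].
    by apply/setP => y; rewrite !inE.
  by rewrite cardsU1 inE (st_noloop hs) reg.
have hinj : forall x, x \in I -> {in [set y | (y == x) || BIG1 B x y] &, injective c}.
  move=> x xI; apply/imset_injP; rewrite hN.
  have -> : c @: [set y | (y == x) || BIG1 B x y] = setT.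
    apply/setP => i; rewrite inE; have [y /andP [yN /eqP <-]] := crain x xI i.
    by apply: imset_f; rewrite inE.
  by rewrite cardsT card_ord.
have hcol : forall x i, x \in I ->
    \sum_(y | c y == i) ((y == x) || BIG1 B x y : nat) = 1.
  move=> x i xI; have [y0 /andP [y0N /eqP cy0]] := crain x xI i.
  rewrite (bigD1 y0) /=; last by rewrite cy0.
  rewrite y0N big1 // => y /andP [/eqP cy yy0]; apply/eqP; rewrite eqb0.
  apply/negP => yN; move/eqP: yy0; apply.
  by apply: (hinj x xI); rewrite ?inE // cy cy0.
have hw : forall y, \sum_(x in I) ((y == x) || BIG1 B x y : nat)
    + (z \in val y) + k * (y \in I) = (y \in I) + k.
  move=> y; case yI: (y \in I).
    rewrite (bigD1 y) //= eqxx big1 /=.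
      have -> : (z \in val y) = false.
        apply/negbTE/negP => zy.
        have : z \in U by rewrite inE; apply/existsP; exists y; rewrite yI zy.
        by rewrite hUz eqxx.
      by rewrite muln1 addn0.
    move=> x /andP [xI xy]; rewrite eq_sym (negbTE xy) /=.
    by have := Idisj x y xI yI xy; rewrite -setI_eq0 -cards_eq0 /BIG1 => /eqP ->.
  have -> : \sum_(x in I) ((y == x) || BIG1 B x y : nat) = \sum_(x in I) #|val x :&: val y|.
    apply: eq_bigr => x xI.
    have xy : x != y by apply: contraFneq yI => <-.
    rewrite eq_sym (negbTE xy) /= /BIG1.
    by have := st_meet hs xy; case: #|_| => [|[|]].
  rewrite -(@cover_sum _ _ I val (val y) Idisj).
  have -> : val y :&: U = val y :\ z by apply/setP => p; rewrite in_setD1 in_setI hUz andbC.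
  have h := cardsD1 z (val y); rewrite (st_size hs y) in h.
  by rewrite h muln0 addn0 add0n addnC.
set q := fun i => \sum_(y | c y == i) (z \in val y : nat).
set a := fun i => \sum_(y | c y == i) (y \in I : nat).
have hE : forall i, #|I| + q i + k * a i = a i + \sum_(y | c y == i) k.
  move=> i.
  have hm : #|I| = \sum_(y | c y == i) \sum_(x in I) ((y == x) || BIG1 B x y : nat).
    rewrite exchange_big /= -sum1_card; apply: eq_bigr => x xI; by rewrite hcol.
  rewrite /q /a hm big_distrr /= -!big_split /=; apply: eq_bigr => y _; exact: hw.
set Z := [set y : block B | z \in val y].
have hZinj : {in Z &, injective c}.
  move=> y y'; rewrite !inE => zy zy' cyy'; apply/eqP; apply/negP => /negP yy'.
  have hadj : BIG1 B y y'.
    rewrite /BIG1 eqn_leq (st_meet hs yy') /=; apply/card_gt0P; exists z.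
    by rewrite inE zy zy'.
  by move: (cprop y y' hadj); rewrite cyy' eqxx.
have hq1 : forall y0, y0 \in Z -> q (c y0) = 1.
  move=> y0 y0Z; rewrite /q (bigD1 y0) //=; move: (y0Z); rewrite inE => ->.
  rewrite big1 // => y /andP [/eqP cy yy0]; apply/eqP; rewrite eqb0.
  apply/negP => zy; move/eqP: yy0; apply; apply: hZinj => //; by rewrite inE.
have hq0 : forall i, i \notin c @: Z -> q i = 0.
  move=> i iZ; rewrite /q big1 // => y /eqP cy; apply/eqP; rewrite eqb0.
  apply/negP => zy; move/negP: iZ; apply; rewrite -cy; apply: imset_f; by rewrite inE.
have hapos : forall i, 0 < a i -> exists2 x, x \in I & c x = i.
  move=> i ai; case: (boolP [exists x in I, c x == i]) => [/existsP [x /andP [xI /eqP cx]]|hn].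
    by exists x.
  exfalso; move: ai; rewrite /a big1 // => y /eqP cy.
  apply/eqP; rewrite eqb0; apply/negP => yI; move/negP: hn; apply.
  by apply/existsP; exists y; rewrite yI cy eqxx.
have hK : forall i, k %| \sum_(y | c y == i) k.
  by move=> i; apply: dvdn_sum => y _; exact: dvdnn.
case: (boolP (k %| #|I|.+1)) => hdiv; last first.
  have hsub : c @: Z \subset c @: I.
    apply/subsetP => i /imsetP [y0 y0Z ->].
    have := hE (c y0); rewrite hq1 //.
    case: (posnP (a (c y0))) => [a0|apos].
      rewrite a0 muln0 addn0 add0n => h; exfalso; move/negP: hdiv; apply.
      rewrite -addn1 h; exact: hK.
    move=> _; have [x xI cx] := hapos _ apos.
    by rewrite -cx imset_f.
  have := subset_leq_card hsub; rewrite (card_in_imset hZinj) => h.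
  exact: (@ar3 s #|I| k hsm m0 k2 (leq_trans h (leq_imset_card c I))).
rewrite -addn1 in hdiv.
have ha2 : forall i, i \notin c @: Z -> 1 < a i.
  move=> i iZ; have := hE i; rewrite hq0 // addn0 ltnNge.
  case: (a i) => [|[|n]] // h.
    move: hdiv; rewrite muln0 addn0 add0n in h.
    rewrite h (dvdn_addr _ (hK i)) dvdn1 => /eqP k1; by rewrite k1 in k2.
  rewrite muln1 in h.
  have e : #|I| + 1 + k = \sum_(y | c y == i) k + 2.
    by rewrite addnAC h -addnA addnC -addnA.
  move: (dvdn_add hdiv (dvdnn k)); rewrite e (dvdn_addr _ (hK i)).
  by move/(dvdn_leq (isT : 0 < 2)); rewrite leqNgt k2.
have hsum : \sum_(i : 'I_r.+1) a i = #|I|.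
  rewrite -sum1_card (partition_big c predT) //=.
  apply: eq_bigr => j _; rewrite /a big_mkcond [RHS]big_mkcond; apply: eq_bigr => y _.
  by case: (y \in I); case: (c y == j).
have h2 : 2 * #|~: (c @: Z)| <= #|I|.
  rewrite -hsum (bigID (fun i => i \in c @: Z)) /= mulnC -sum_nat_const.
  apply: leq_trans (leq_addl _ _).
  under eq_bigl => i do rewrite in_setC.
  apply: leq_sum => i iZ; exact: ha2.
have hcZ : #|~: (c @: Z)| = r.+1 - s.
  have h := cardsC (c @: Z); rewrite card_ord (card_in_imset hZinj) in h.
  apply: (@addnI s); rewrite h; move: (leq_addr #|~: c @: Z| s); rewrite h => hle.
  by rewrite subnKC.
have hG4 : s + s <= r.+1 + 1.
  have [x0 x0I] := card_gt0P m0.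
  have : 1 < #|val x0| by rewrite (st_size hs) ltnW.
  move=> /card_gt1P [p [p' [px0 p'x0 pp']]].
  have hsub : [set y : block B | p \in val y] :|: [set y : block B | p' \in val y]
      \subset [set y | (y == x0) || BIG1 B x0 y].
    apply/subsetP => y; rewrite !inE.
    case: (eqVneq y x0) => [//|yx0] /= hy.
    rewrite eq_sym in yx0.
    rewrite /BIG1 eqn_leq (st_meet hs yx0) /=; apply/card_gt0P.
    by case/orP: hy => hy; [exists p | exists p']; rewrite inE ?px0 ?p'x0 hy.
  have hcap : #|[set y : block B | p \in val y] :&: [set y : block B | p' \in val y]| <= 1.
    rewrite -(cards1 x0); apply: subset_leq_card; apply/subsetP => y.
    rewrite !inE => /andP [py p'y]; apply/eqP; exact: (st_uniq hs pp').
  have := cardsUI [set y : block B | p \in val y] [set y : block B | p' \in val y].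
  rewrite !hrep -(hN x0) => <-; apply: leq_add => //; exact: subset_leq_card.
apply: (@ar2 #|I| s r k k2 hsm m0 _ hG4); by rewrite -hcZ.
Qed.
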